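(* Let $(X,\nu,\eta)$ be a solution of the fluid equations with some arrival rate $\lambda\ge0$ and initial condition in $\bar{\mathcal S}_0$, and let $Q$ be its queue process. Then $\limsup_{t\to\infty}\int_0^tQ(s)g^s(t-s)\,ds\le\limsup_{t\to\infty}Q(t)$.
   Context: Standing assumption (A1): $G^s,G^r$ are cumulative distribution functions on $[0,\infty)$ with $G^s(0+)=G^r(0+)=0$, absolutely continuous with densities $g^s,g^r$. Write $\bar G^s=1-G^s$, $\bar G^r=1-G^r$, $H^s=\sup\{x\ge0:G^s(x)<1\}$, $H^r=\sup\{x\ge0:G^r(x)<1\}$, and hazard rates $h^s=g^s/\bar G^s$ on $[0,H^s)$, $h^r=g^r/\bar G^r$ on $[0,H^r)$. It is assumed that $\int_0^\infty\bar G^r(x)\,dx<\infty$, $\int_0^\infty\bar G^s(x)\,dx=\int_0^\infty xg^s(x)\,dx=1$, and that there exist $\bar H^s<H^s$ and $\bar H^r<H^r$ such that $h^s$ (resp. $h^r$) is a.e. equal to a function that is bounded or lower semicontinuous on $(\bar H^s,H^s)$ (resp. $(\bar H^r,H^r)$). Notation: $\mathcal M_F[0,H)$ is the set of finite nonnegative Borel measures on $[0,H)$; $\langle\psi,\mu\rangle=\int\psi\,d\mu$; $\mathbf 1$ is the constant function $1$; for $\mu\in\mathcal M_F[0,H)$, $F^\mu(x)=\mu[0,x]$ and $(F^\mu)^{-1}(y)=\inf\{x>0:F^\mu(x)\ge y\}$. State space: $\bar{\mathcal S}_0=\{(x,\nu,\eta)\in\mathbb R_+\times\mathcal M_F[0,H^s)\times\mathcal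 M_F[0,H^r):1-\langle\mathbf 1,\nu\rangle=[1-x]^+\}$. Fluid equations: Given $\lambda\ge0$ and $(X(0),\nu_0,\eta_0)\in\bar{\mathcal S}_0$, a càdlàg function $t\mapsto(X(t),\nu_t,\eta_t)$ is a solution of the fluid equations with arrival rate $\lambda$ and this initial condition if for all $t\ge0$: $S(t):=\int_0^t\langle h^r,\eta_s\rangle ds<\infty$ and $D(t):=\int_0^t\langle h^s,\nu_s\rangle ds<\infty$; for every $\varphi\in C^1_c([0,H^s)\times\mathbb R_+)$, $\langle\varphi(\cdot,t),\nu_t\rangle=\langle\varphi(\cdot,0),\nu_0\rangle+\int_0^t\langle\varphi_s(\cdot,s)+\varphi_x(\cdot,s),\nu_s\rangle ds-\int_0^t\langle h^s\varphi(\cdot,s),\nu_s\rangle ds+\int_0^t\varphi(0,s)\,dK(s)$, where $K(t)=\langle\mathbf 1,\nu_t\rangle-\langle\mathbf 1,\nu_0\rangle+D(t)$; for every $\varphi\in C^1_c([0,H^r)\times\mathbb R_+)$, $\langle\varphi(\cdot,t),\eta_t\rangle=\langle\varphi(\cdot,0),\eta_0\rangle+\int_0^t\langle\varphi_s(\cdot,s)+\varphi_x(\cdot,s),\eta_s\rangle ds-\int_0^t\langle h^r\varphi(\cdot,s),\eta_s\rangle ds+\lambda\int_0^t\varphi(0,s)\,ds$; $1-\langle\mathbf 1,\nu_t\rangle=[1-X(t)]^+$; $X(t)=X(0)+\lambda t-D(t)-R(t)$ with $R(t)=\int_0^t\int_0^{Q(s)}h^r((F^{\eta_s})^{-1}(y))\,dy\,ds$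 and $Q(t)=X(t)-\langle\mathbf 1,\nu_t\rangle$; and $Q(t)\le\langle\mathbf 1,\eta_t\rangle$. *)

(* Defs.v *)
From HB Require Import structures.
From mathcomp Require Import all_boot all_order all_algebra.
From mathcomp Require Import all_classical all_reals all_analysis.
Set Implicit Arguments. Unset Strict Implicit. Unset Printing Implicit Defensive.
Import Order.TTheory GRing.Theory Num.Theory.
Import numFieldNormedType.Exports.
Local Open Scope classical_set_scope.
Local Open Scope ring_scope.

Section FluidDefs.
Variable R : realType.

Notation leb := (@lebesgue_measure R).
Notation meas := {measure set (measurableTypeR R) -> \bar R}%E.

Definition cdf (g : R -> R) (x : R) : R :=
  fine (\int[leb]_(y in `[0%R, x]) (g y)%:E)%E.

Definition ccdf (g : R -> R) (x : R) : R := 1 - cdf g x.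

Definition Hsup (g : R -> R) : \bar R :=
  ereal_sup [set x%:E | x in [set x : R | 0 <= x /\ cdf g x < 1]].

Definition hazard (g : R -> R) (x : R) : R := g x / ccdf g x.

Definition dom0H (H : \bar R) : set R := [set x : R | 0 <= x /\ (x%:E < H)%E].

Definition lsc_on (A : set R) (f : R -> R) : Prop :=
  forall x, A x -> forall e : R, 0 < e ->
    exists2 d : R, 0 < d & forall y, A y -> `|y - x| < d -> f x - e < f y.

Definition hazard_regular (g : R -> R) : Prop :=
  exists Hb : R, (Hb%:E < Hsup g)%E /\
    exists f : R -> R,
      leb.-negligible [set x | (Hb%:E < x%:E < Hsup g)%E /\ hazard g x <> f x] /\
      ((exists M : R, forall x, (Hb%:E < x%:E < Hsup g)%E -> `|f x| <= M) \/
       lsc_on [set x | (Hb%:E < x%:E < Hsup g)%E] f).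

Definition is_density (g : R -> R) : Prop :=
  measurable_fun [set: R] g /\ (forall x, 0 <= x -> 0 <= g x) /\
  (\int[leb]_(x in `[0%R, +oo[) (g x)%:E = 1)%E.

Definition assumptionA1 (gs gr : R -> R) : Prop :=
  is_density gs /\ is_density gr /\
  (\int[leb]_(x in `[0%R, +oo[) (ccdf gr x)%:E < +oo)%E /\
  (\int[leb]_(x in `[0%R, +oo[) (ccdf gs x)%:E = 1)%E /\
  (\int[leb]_(x in `[0%R, +oo[) (x * gs x)%:E = 1)%E /\
  hazard_regular gs /\ hazard_regular gr.

(* element of M_F[0,H): finite measure on R carried by [0,H) *)
Definition MF (H : \bar R) (mu : meas) : Prop :=
  (mu setT < +oo)%E /\ mu (~` dom0H H) = 0%E.

Definition mpair (H : \bar R) (mu : meas) (f : R -> R) : R :=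
  fine (\int[mu]_(x in dom0H H) (f x)%:E)%E.

Definition epair (H : \bar R) (mu : meas) (f : R -> R) : \bar R :=
  (\int[mu]_(x in dom0H H) (f x)%:E)%E.

Definition mmass (H : \bar R) (mu : meas) : R := mpair H mu (fun _ => 1).

Definition Fmu (mu : meas) (x : R) : R := fine (mu `[0%R, x]%classic).
Definition Fmu_inv (mu : meas) (y : R) : R := inf [set x : R | 0 < x /\ y <= Fmu mu x].

Definition eint0 (t : R) (F : R -> \bar R) : \bar R := (\int[leb]_(s in `[0%R, t]) F s)%E.
Definition rint0 (t : R) (F : R -> R) : R := fine (eint0 t (fun s => (F s)%:E)).

Definition cadlag (f : R -> R) : Prop :=
  (forall t, 0 <= t -> f x @[x --> at_right t] --> f t) /\
  (forall t, 0 < t -> cvg (f x @[x --> at_left t])).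

Definition Cb (H : \bar R) (phi : R -> R) : Prop :=
  {within dom0H H, continuous phi} /\ exists M : R, forall x, dom0H H x -> `|phi x| <= M.

(* cadlag in M_F[0,H) with the weak topology *)
Definition cadlag_meas (H : \bar R) (nu : R -> meas) : Prop :=
  (forall t, 0 <= t -> forall phi, Cb H phi ->
      mpair H (nu s) phi @[s --> at_right t] --> mpair H (nu t) phi) /\
  (forall t, 0 < t -> exists mu : meas, MF H mu /\ forall phi, Cb H phi ->
      mpair H (nu s) phi @[s --> at_left t] --> mpair H mu phi).

(* phi in C^1_c([0,H) x R_+), given with its partial derivatives phix, phis *)
Definition C1c (H : \bar R) (phi phix phis : R -> R -> R) : Prop :=
  (forall x s : R, is_derive x (1:R) (fun y : R => phi y s) (phix x s)) /\
  (forall x s : R, is_derive s (1:R) (phi x) (phis x s)) /\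
  continuous (fun p : R * R => phix p.1 p.2) /\
  continuous (fun p : R * R => phis p.1 p.2) /\
  exists c T : R, (c%:E < H)%E /\
    forall x s, 0 <= x -> 0 <= s -> c < x \/ T < s -> phi x s = 0.

(* Riemann-Stieltjes integral int_0^t f(s) dK(s) of a C^1 integrand f (with
   derivative f') against K, defined by integration by parts *)
Definition stieltjes (t : R) (f f' K : R -> R) : R :=
  f t * K t - f 0 * K 0 - rint0 t (fun s => K s * f' s).

Definition Dext (gs : R -> R) (nu : R -> meas) (t : R) : \bar R :=
  eint0 t (fun s => epair (Hsup gs) (nu s) (hazard gs)).
Definition Sext (gr : R -> R) (eta : R -> meas) (t : R) : \bar R :=
  eint0 t (fun s => epair (Hsup gr) (eta s) (hazard gr)).
Definition Dproc gs nu t : R := fine (Dext gs nu t).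

Definition Qproc (gs : R -> R) (X : R -> R) (nu : R -> meas) (t : R) : R :=
  X t - mmass (Hsup gs) (nu t).

Definition Kproc (gs : R -> R) (nu : R -> meas) (t : R) : R :=
  mmass (Hsup gs) (nu t) - mmass (Hsup gs) (nu 0) + Dproc gs nu t.

Definition Rext (gs gr : R -> R) (X : R -> R) (nu eta : R -> meas) (t : R) : \bar R :=
  eint0 t (fun s => (\int[leb]_(y in `[0%R, Qproc gs X nu s]) (hazard gr (Fmu_inv (eta s) y))%:E)%E).

Definition initS0 (gs gr : R -> R) (x : R) (nu0 eta0 : meas) : Prop :=
  0 <= x /\ MF (Hsup gs) nu0 /\ MF (Hsup gr) eta0 /\
  1 - mmass (Hsup gs) nu0 = Num.max (1 - x) 0.

Definition fluid_solution (gs gr : R -> R) (lam : R)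
    (X : R -> R) (nu eta : R -> meas) : Prop :=
  initS0 gs gr (X 0) (nu 0) (eta 0) /\
  (forall t, 0 <= t -> MF (Hsup gs) (nu t) /\ MF (Hsup gr) (eta t)) /\
  cadlag X /\ cadlag_meas (Hsup gs) nu /\ cadlag_meas (Hsup gr) eta /\
  (forall t, 0 <= t ->
     (Sext gr eta t < +oo)%E /\ (Dext gs nu t < +oo)%E /\
     (Rext gs gr X nu eta t < +oo)%E) /\
  (forall t, 0 <= t -> forall phi phix phis, C1c (Hsup gs) phi phix phis ->
     mpair (Hsup gs) (nu t) (fun x => phi x t) =
       mpair (Hsup gs) (nu 0) (fun x => phi x 0)
     + rint0 t (fun s => mpair (Hsup gs) (nu s) (fun x => phis x s + phix x s))
     - rint0 t (fun s => mpair (Hsup gs) (nu s) (fun x => hazard gs x * phi x s))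
     + stieltjes t (phi 0) (phis 0) (Kproc gs nu)) /\
  (forall t, 0 <= t -> forall phi phix phis, C1c (Hsup gr) phi phix phis ->
     mpair (Hsup gr) (eta t) (fun x => phi x t) =
       mpair (Hsup gr) (eta 0) (fun x => phi x 0)
     + rint0 t (fun s => mpair (Hsup gr) (eta s) (fun x => phis x s + phix x s))
     - rint0 t (fun s => mpair (Hsup gr) (eta s) (fun x => hazard gr x * phi x s))
     + lam * rint0 t (phi 0)) /\
  (forall t, 0 <= t -> 1 - mmass (Hsup gs) (nu t) = Num.max (1 - X t) 0) /\
  (forall t, 0 <= t ->
     X t = X 0 + lam * t - Dproc gs nu t - fine (Rext gs gr X nu eta t)) /\
  (forall t, 0 <= t -> Qproc gs X nu t <= mmass (Hsup gr) (eta t)).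

Definition limsup_pinfty (f : R -> R) : \bar R :=
  ereal_inf [set ereal_sup [set (f t)%:E | t in [set t | T <= t]] | T in [set: R]].

Definition convQ (Q g : R -> R) (t : R) : R :=
  rint0 t (fun s => Q s * g (t - s)).

End FluidDefs.

(* Main.v *)
Require Import Defs.
From HB Require Import structures.
From mathcomp Require Import all_boot all_order all_algebra.
From mathcomp Require Import all_classical all_reals all_analysis.
From mathcomp Require Import ring lra.
From mathcomp Require Import measurable_realfun.
Import Order.TTheory GRing.Theory Num.Theory.
Import numFieldNormedType.Exports.
Local Open Scope classical_set_scope.
Local Open Scope ring_scope.
Section S.
Variable R : realType.
Notation leb := (@lebesgue_measure R).
Local Open Scope ereal_scope.
Definition refl (t : R) : measurableTypeR R -> measurableTypeR R := fun s => (t - s)%R.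
Lemma mrefl (t : R) : measurable_fun [set: measurableTypeR R] (refl t).
Proof. rewrite /refl. apply: measurable_realfun.measurable_funB => //. Qed.
Lemma refl_meas (t : R) A :
  measurable A -> pushforward leb (refl t) A = leb A.
Proof.
move=> mA; apply/esym/lebesgue_measure_unique => //=; last first.
move=> _ _ [[a b]] _ <-.
rewrite /pushforward.
have -> : refl t @^-1` `]a, b] = `[(t - b)%R, (t - a)%R[%classic.
  apply/seteqP; split => x /=; rewrite /refl !in_itv /=.
    by move=> /andP[h1 h2]; apply/andP; split; lra.
  by move=> /andP[h1 h2]; apply/andP; split; lra.
rewrite !lebesgue_measure_itv /= !lte_fin.
have -> : (t - b < t - a)%R = (a < b)%R by apply/idP/idP; lra.
case: ifP => // _; congr (_%:E); lra.
exact: mrefl.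
Qed.

Lemma refl_int (g : R -> R) (mg : measurable_fun [set: R] g) (t a b : R) :
  (forall x, (t - b <= x <= t - a)%R -> (0 <= g x)%R) ->
  \int[leb]_(s in `[a, b]) (g (t - s))%:E = \int[leb]_(u in `[(t - b)%R, (t - a)%R]) (g u)%:E.
Proof.
move=> g0.
have E : `[a, b]%classic = refl t @^-1` `[(t - b)%R, (t - a)%R].
  apply/seteqP; split => x /=; rewrite /refl !in_itv /=.
    by move=> /andP[h1 h2]; apply/andP; split; lra.
  by move=> /andP[h1 h2]; apply/andP; split; lra.
rewrite E.
transitivity (\int[leb]_(x in refl t @^-1` `[(t - b)%R, (t - a)%R]) ((fun u => (g u)%:E) \o refl t) x) => //.
rewrite -(ge0_integral_pushforward (mrefl t)) //.
- apply: (eq_measure_integral leb); last first.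
    by move=> mf A mA _; exact: (@refl_meas t A mA).
  exact: mrefl.
- apply/measurable_realfun.measurable_EFinP; exact: measurable_funS mg.
- by move=> x; rewrite inE /= in_itv /= => /g0; rewrite lee_fin.
Qed.

Lemma le_int_nm (D : set (measurableTypeR R)) (f h : measurableTypeR R -> \bar R) :
  (forall x, D x -> 0 <= f x) -> (forall x, D x -> f x <= h x) ->
  \int[leb]_(x in D) f x <= \int[leb]_(x in D) h x.
Proof.
move=> f0 fh.
have h0 : forall x, D x -> 0 <= h x by move=> x Dx; exact: le_trans (f0 x Dx) (fh x Dx).
rewrite (ge0_integralE _ f0) (ge0_integralE _ h0).
apply: ereal_sup_le => _ [s hs <-]; exists s => // x.
apply: le_trans (hs x) _.
by rewrite /patch; case: ifPn => // /set_mem Dx; exact: fh.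
Qed.

Lemma cdf_le1 (g : R -> R) : Defs.is_density g -> forall x, (Defs.cdf g x <= 1)%R.
Proof.
move=> [mg [g0 g1]] x.
have I0 : 0 <= \int[leb]_(y in `[0%R, x]) (g y)%:E.
  by apply: integral_ge0 => y; rewrite /= in_itv /= => /andP[y0 _]; rewrite lee_fin g0.
have I1 : \int[leb]_(y in `[0%R, x]) (g y)%:E <= 1.
  rewrite -g1; apply: ge0_subset_integral => //.
  - apply/measurable_realfun.measurable_EFinP; exact: measurable_funS mg.
  - by move=> y; rewrite /= in_itv /= andbT => y0; rewrite lee_fin g0.
  - by move=> y; rewrite /= !in_itv /= => /andP[-> _].
rewrite /Defs.cdf -lee_fin fineK //.
by rewrite ge0_fin_numE // (le_lt_trans I1) // ltey.
Qed.

Lemma hazard_ge0 (g : R -> R) : Defs.is_density g -> forall x, (0 <= x)%R -> (0 <= hazard g x)%R.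
Proof.
move=> dg x x0; rewrite /hazard divr_ge0 //; first by case: dg => _ [g0 _]; exact: g0.
by rewrite /Defs.ccdf subr_ge0 cdf_le1.
Qed.

Lemma Fmu_inv_ge0 (mu : {measure set (measurableTypeR R) -> \bar R}) y : (0 <= Fmu_inv mu y)%R.
Proof.
rewrite /Fmu_inv.
case: (pselect (exists x, 0 < x /\ y <= Fmu mu x)%R) => [[x hx]|nx].
  apply: lb_le_inf; first by exists x.
  by move=> z [z0 _]; exact: ltW.
have -> : [set x : R | (0 < x)%R /\ (y <= Fmu mu x)%R] = set0.
  by apply/seteqP; split => z // hz; apply: nx; exists z.
by rewrite inf0.
Qed.

Lemma tail (g : R -> R) : Defs.is_density g -> forall d : R, (0 < d)%R ->
  exists N : R, (0 <= N)%R /\ forall a b : R, (N <= a)%R ->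
    \int[leb]_(x in `[a, b]) (g x)%:E <= d%:E.
Proof.
move=> [mg [g0 g1]] d d0.
pose F := fun n : nat => `[0%R, n%:R]%classic : set (measurableTypeR R).
have mF : forall n, measurable (F n) by move=> n; exact: measurable_itv.
have mf : forall A : set (measurableTypeR R), measurable A -> measurable_fun A (fun x => (g x)%:E).
  move=> A mA; apply/measurable_realfun.measurable_EFinP; exact: measurable_funS mg.
have ndF : {homo F : n m / (n <= m)%N >-> (n <= m)%O}.
  move=> m n mn; rewrite subsetEset /F => x /=; rewrite !in_itv /= => /andP[-> h].
  by rewrite (le_trans h) // ler_nat.
have f0 : forall n x, F n x -> 0 <= (g x)%:E.
  by move=> n x; rewrite /F /= in_itv /= => /andP[x0 _]; rewrite lee_fin g0.
have cv := @ge0_nondecreasing_set_cvg_integral _ _ _ F (fun x => (g x)%:E) leb ndF mF (fun n => mf _ (mF n)) f0.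
have UF : \bigcup_i F i = `[0%R, +oo[%classic.
  apply/seteqP; split => x /=.
    by move=> [n _]; rewrite /F /= !in_itv /= => /andP[-> _].
  rewrite in_itv /= andbT => x0; exists (Num.Def.truncn x).+1 => //.
  by rewrite /F /= in_itv /= x0 ltW // truncnS_gt.
rewrite UF g1 in cv.
have ndu := @ge0_nondecreasing_set_nondecreasing_integral _ _ _ F (fun x => (g x)%:E) leb ndF mF (fun n => mf _ (mF n)) f0.
have e1 : ereal_sup (range (fun i => \int[leb]_(x in F i) (g x)%:E)) = 1.
  rewrite -(cvg_lim _ cv) //; apply/esym/cvg_lim => //.
  exact: ereal_nondecreasing_cvgn.
have : ((1 - d)%:E < ereal_sup (range (fun i => \int[leb]_(x in F i) (g x)%:E))).
  by rewrite e1 lte_fin; lra.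
case/ereal_sup_gt => _ [n _ <-] hn.
exists (n%:R + 1)%R; split; first by apply: addr_ge0.
move=> a b Na.
set J := \int[leb]_(x in `[a, b]) (g x)%:E.
set U := \int[leb]_(x in F n) (g x)%:E in hn *.
have J0 : 0 <= J.
  apply: integral_ge0 => x; rewrite /= in_itv /= => /andP[ax _]; rewrite lee_fin g0 //.
  by apply: le_trans ax; apply: le_trans Na; apply: addr_ge0.
have U0 : 0 <= U by apply: integral_ge0 => x /f0.
have UJ : U + J <= 1.
  rewrite /U /J -ge0_integral_setU //; last 3 first.
  - by apply: mf; apply: measurableU => //; exact: measurable_itv.
  - move=> x [/f0 //|]; rewrite /= in_itv /= => /andP[ax _]; rewrite lee_fin g0 //.
    by apply: le_trans ax; apply: le_trans Na; apply: addr_ge0.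
  - rewrite disj_set2E; apply/eqP/seteqP; split => x //=.
    rewrite /F /= !in_itv /= => -[/andP[_ xn] /andP[ax _]].
    move: (le_trans Na ax) xn => h1 h2; clear -h1 h2; lra.
  rewrite -g1; apply: ge0_subset_integral => //.
  - by apply: measurableU => //; exact: measurable_itv.
  - by apply: mf; exact: measurable_itv.
  - by move=> x; rewrite /= in_itv /= andbT => x0; rewrite lee_fin g0.
  - move=> x [|]; rewrite /F /= !in_itv /= ?andbT.
      by move=> /andP[].
    move=> /andP[ax _]; apply: le_trans ax; apply: le_trans Na; apply: addr_ge0 => //.
have Ufin : U \is a fin_num.
  by rewrite ge0_fin_numE // (le_lt_trans _ (ltey 1)) // (le_trans _ UJ) // leeDl.
have Jfin : J \is a fin_num.
  by rewrite ge0_fin_numE // (le_lt_trans _ (ltey 1)) // (le_trans _ UJ) // leeDr.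
move: hn UJ; rewrite -(fineK Ufin) -(fineK Jfin) -EFinD !lee_fin lte_fin.
move=> h1 h2; clear -h1 h2; lra.
Qed.

Lemma conv_bound (g : R -> R) (Q : R -> R) (t T M B d : R) :
  Defs.is_density g -> (0 <= T)%R -> (T <= t)%R -> (0 <= M)%R -> (0 <= B)%R ->
  (forall s, (0 <= s)%R -> (s <= t)%R -> (0 <= Q s)%R) ->
  (forall s, (0 <= s)%R -> (s <= T)%R -> (Q s <= B)%R) ->
  (forall s, (T <= s)%R -> (s <= t)%R -> (Q s <= M)%R) ->
  \int[leb]_(x in `[(t - T)%R, t]) (g x)%:E <= d%:E ->
  (rint0 t (fun s => Q s * g (t - s)) <= M + B * d)%R.
Proof.
move=> [mg [g0 g1]] T0 Tt M0 B0 Q0 QB QM Hd.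
have mk : forall A : set (measurableTypeR R), measurable A -> measurable_fun A (fun s => (g (t - s))%:E).
  move=> A mA; apply/measurable_realfun.measurable_EFinP.
  exact: measurable_funS (measurableT_comp mg (mrefl t)).
have k0 : forall s : R, (s <= t)%R -> 0 <= (g (t - s))%:E.
  by move=> s st; rewrite lee_fin g0 // subr_ge0.
set I := eint0 t (fun s => (Q s * g (t - s))%:E).
have I0 : 0 <= I.
  apply: integral_ge0 => s; rewrite /= in_itv /= => /andP[s0 st].
  by rewrite lee_fin mulr_ge0 // ?Q0 // g0 // subr_ge0.
have HI : I <= \int[leb]_(s in `[0%R, t]) ((M%:E * (g (t - s))%:E) +
     ((fun s => B%:E * (g (t - s))%:E) \_ `[0%R, T]) s).
  rewrite /I /eint0; apply: le_int_nm.
    move=> s; rewrite /= in_itv /= => /andP[s0 st].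
    by rewrite lee_fin mulr_ge0 // ?Q0 // g0 // subr_ge0.
  move=> s; rewrite /= in_itv /= => /andP[s0 st].
  have G0 : (0 <= g (t - s))%R by rewrite g0 // subr_ge0.
  rewrite /patch; case: ifPn => [/set_mem|]; rewrite /= ?in_itv /=.
    move=> /andP[_ sT]; rewrite -!EFinM -EFinD lee_fin.
    have := QB s s0 sT; move: G0 M0 => h1 h2 h3; clear -h1 h2 h3; nra.
  rewrite notin_setE /= in_itv /= s0 /= => /negP; rewrite -ltNge => Ts.
  rewrite adde0 -EFinM lee_fin.
  have := QM s (ltW Ts) st; move: G0 => h1 h3; clear -h1 h3; nra.
have m0t : measurable (`[0%R, t]%classic : set (measurableTypeR R)) by exact: measurable_itv.
rewrite ge0_integralD // in HI; last 4 first.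
- by move=> s; rewrite /= in_itv /= => /andP[_ st]; rewrite mule_ge0 // k0.
- apply: emeasurable_funM => //; exact: mk.
- move=> s _; rewrite /patch; case: ifPn => // /set_mem; rewrite /= in_itv /= => /andP[_ sT].
  by rewrite mule_ge0 // k0 // (le_trans sT).
- apply/measurable_restrict => //.
  apply: emeasurable_funM => //; apply: mk; apply: measurableI => //; exact: measurable_itv.
rewrite -integral_mkcondr in HI.
have E : (`[0%R, t] `&` `[0%R, T])%classic = `[0%R, T]%classic :> set (measurableTypeR R).
  apply/seteqP; split => x /=; rewrite !in_itv /=.
    by move=> [_ ->].
  move=> /andP[x0 xT]; split; apply/andP; split => //; exact: le_trans Tt.
rewrite E in HI.
rewrite !ge0_integralZl_EFin // in HI; last 4 first.
- by move=> s; rewrite /= in_itv /= => /andP[_ sT]; rewrite k0 // (le_trans sT).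
- apply: mk; exact: measurable_itv.
- by move=> s; rewrite /= in_itv /= => /andP[_ st]; rewrite k0.
- exact: mk.
rewrite !refl_int // ?subrr ?subr0 in HI; last 2 first.
- by move=> x /andP[x0 _]; apply: g0; apply: le_trans x0; rewrite ?subr_ge0.
- by move=> x /andP[x0 _]; apply: g0; apply: le_trans x0; rewrite ?subr_ge0.
have J1 : \int[leb]_(x in `[0%R, t]) (g x)%:E <= 1.
  rewrite -g1; apply: ge0_subset_integral => //.
  - apply/measurable_realfun.measurable_EFinP; exact: measurable_funS mg.
  - by move=> y; rewrite /= in_itv /= andbT => y0; rewrite lee_fin g0.
  - by move=> y; rewrite /= !in_itv /= => /andP[-> _].
have : I <= (M + B * d)%:E.
  apply: le_trans HI _; rewrite EFinD EFinM; apply: leeD.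
    by rewrite -[X in _ <= X]mule1; apply: lee_wpmul2l; rewrite // lee_fin.
  by apply: lee_wpmul2l; rewrite // lee_fin.
move=> HI2; rewrite /rint0 -/I -lee_fin fineK //.
by rewrite ge0_fin_numE // (le_lt_trans HI2) // ltey.
Qed.

Lemma fluid_facts (gs gr : R -> R) (lam : R) (X : R -> R) (nu eta : R -> {measure set (measurableTypeR R) -> \bar R}) :
  assumptionA1 gs gr -> (0 <= lam)%R -> fluid_solution gs gr lam X nu eta ->
  forall t, (0 <= t)%R -> (0 <= Qproc gs X nu t)%R /\ (Qproc gs X nu t <= `|X 0| + lam * t)%R.
Proof.
move=> [dgs [dgr _]] lam0 [_ [_ [_ [_ [_ [_ [_ [_ [mrel [Xeq _]]]]]]]]]] t t0.
have D0 : (0 <= Dproc gs nu t)%R.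
  apply: fine_ge0; apply: integral_ge0 => s _; apply: integral_ge0 => x [x0 _].
  by rewrite lee_fin; apply: hazard_ge0.
have R0 : (0 <= fine (Rext gs gr X nu eta t))%R.
  apply: fine_ge0; apply: integral_ge0 => s _; apply: integral_ge0 => y _.
  by rewrite lee_fin; apply: hazard_ge0 => //; exact: Fmu_inv_ge0.
have Xle : (X t <= X 0 + lam * t)%R by rewrite (Xeq t t0); lra.
have mr := mrel t t0.
rewrite /Qproc.
move: mr; rewrite maxEle; case: ifP => h mr.
  have X1 : (1 <= X t)%R by move: h; clear; rewrite /= => h; lra.
  have := ler_norm (X 0%R); move: (mulr_ge0 lam0 t0) => h1 h2.
  clear -mr X1 Xle h1 h2; lra.
have := normr_ge0 (X 0%R); move: (mulr_ge0 lam0 t0) => h1 h2.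
clear -mr h1 h2 h; split; [|]; lra.
Qed.
End S.

Theorem mainTheorem3 (R : realType) (gs gr : R -> R) (lam : R)
    (X : R -> R) (nu eta : R -> {measure set (measurableTypeR R) -> \bar R}%E) :
  assumptionA1 gs gr ->
  0 <= lam ->
  fluid_solution gs gr lam X nu eta ->
  (limsup_pinfty (convQ (Qproc gs X nu) gs) <= limsup_pinfty (Qproc gs X nu))%E.
Proof.
move=> A1 lam0 FS.
have dgs : Defs.is_density gs by case: A1.
have QF := @fluid_facts _ _ _ _ _ _ _ A1 lam0 FS.
set Q := Qproc gs X nu in QF *.
have L0 : (0 <= limsup_pinfty Q)%E.
  apply/ereal_infP => _ [T _ <-].
  apply: (@le_trans _ _ (Q (Num.max T 0))%:E).
    by rewrite lee_fin; apply: (QF _ _).1; rewrite le_max lexx orbT.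
  by apply: ereal_sup_ubound; exists (Num.max T 0) => //=; rewrite le_max lexx.
move: L0; case EL: (limsup_pinfty Q) => [l| |] // L0; last by rewrite leey.
rewrite lee_fin in L0.
apply/lee_addgt0Pr => e e0.
have e20 : 0 < e / 2 by rewrite divr_gt0.
have : (limsup_pinfty Q < (l + e / 2)%:E)%E by rewrite EL lte_fin ltrDl.
rewrite /limsup_pinfty => /ereal_inf_lt [_ [T0 _ <-]] hT0.
have QM : forall s, T0 <= s -> Q s <= l + e / 2.
  move=> s sT; rewrite -lee_fin; apply: le_trans (ltW hT0).
  by apply: ereal_sup_ubound; exists s.
set T := Num.max T0 0.
have T0T : T0 <= T by rewrite le_max lexx.
have T00 : 0 <= T by rewrite le_max lexx orbT.
set B := `|X 0| + lam * T.
have B0 : 0 <= B by rewrite addr_ge0 // mulr_ge0.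
set d := e / 2 / (B + 1).
have d0 : 0 < d by rewrite divr_gt0 // ltr_wpDl.
have [N [N0 HN]] := @tail _ _ dgs _ d0.
apply: (@le_trans _ _ (ereal_sup [set (convQ Q gs t)%:E | t in [set t | T + N <= t]])).
  by apply: ereal_inf_lbound; exists (T + N).
apply/ereal_supP => _ [t /= tTN <-].
rewrite lee_fin /convQ.
have Tt : T <= t by move: N0 tTN; clear; move=> h1 h2; lra.
apply: le_trans (@conv_bound _ gs Q t T (l + e / 2) B d dgs T00 Tt _ B0 _ _ _ _) _.
- by apply: addr_ge0 => //; exact: ltW.
- by move=> s s0 _; exact: (QF s s0).1.
- move=> s s0 sT; apply: le_trans (QF s s0).2 _.
  by rewrite lerD2l ler_wpM2l.
- by move=> s sT _; apply: QM; exact: le_trans sT.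
- apply: HN; move: tTN; clear; move=> h; lra.
have : B * d <= e / 2.
  rewrite /d mulrA ler_pdivrMr ?ltr_wpDl //.
  move: B0 e0; clear; move=> h1 h2; nra.
move=> h; move: h; clear; move=> h; lra.
Qed.
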